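(* Let $M$ be a matroid on a finite set $E$ with $r(M)>0$. For every $B\in\mathcal{B}(M)$, $\cup F_M(B)=\cup\mathcal{B}(M)$.
   Context: For a matroid $M$: $\mathcal{I}(M)$ its independent sets, $\mathcal{B}(M)$ its bases, $r(M)$ the size of a base, $r(X)$ the rank of $X\subseteq E$. For a set family $S$, $\cup S=\bigcup_{X\in S}X$. $s(M)=\{A\in\mathcal{I}(M): |A|=r(M)-1\}$; $K_M(X)=\{a\in E: r(X\cup\{a\})=r(X)+1\}$; $F_M(B)=\{K_M(X): X\in s(M),\ X\subseteq B\}$. *)

(* Defs.v *)
(* Matroids on a finite ground set E, represented as a finType T
   (E = [set: T]), given by their family of independent sets. *)
From mathcomp Require Import all_boot.
Set Implicit Arguments. Unset Strict Implicit. Unset Printing Implicit Defensive.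

Section Matroid.
Variable T : finType.

Definition is_matroid (I : {set {set T}}) : Prop :=
  [/\ set0 \in I,
      (forall A B : {set T}, B \in I -> A \subset B -> A \in I) &
      (forall A B : {set T}, A \in I -> B \in I -> #|A| < #|B| ->
         exists2 x, x \in B :\: A & x |: A \in I)].

Definition mrank (I : {set {set T}}) (X : {set T}) : nat :=
  \max_(A in I | A \subset X) #|A|.

Definition bases (I : {set {set T}}) : {set {set T}} :=
  [set B | maxset (fun A : {set T} => A \in I) B].

Definition rankM (I : {set {set T}}) : nat := mrank I [set: T].

Definition sM (I : {set {set T}}) : {set {set T}} :=
  [set A in I | #|A| == (rankM I).-1].

Definition KM (I : {set {set T}}) (X : {set T}) : {set T} :=
  [set a | mrank I (a |: X) == (mrank I X).+1].

Definition FM (I : {set {set T}}) (B : {set T}) : {set {set T}} :=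
  [set KM I X | X in [set X in sM I | X \subset B]].

End Matroid.

(* Main.v *)
Require Import Defs.
From mathcomp Require Import all_boot.

Set Implicit Arguments.
Section H.
Variables (T : finType) (I : {set {set T}}).
Hypothesis HM : is_matroid I.

Lemma sub_ind {A B : {set T}} : B \in I -> A \subset B -> A \in I.
Proof. by case: HM => _ H _; apply: H. Qed.

Lemma ind_le_rank (A : {set T}) : A \in I -> #|A| <= rankM I.
Proof. by move=> HA; apply: (leq_bigmax_cond (P := fun A => (A \in I) && (A \subset setT))); rewrite HA subsetT. Qed.

Lemma mrank_ind (X : {set T}) : X \in I -> mrank I X = #|X|.
Proof.
move=> HX; apply/eqP; rewrite eqn_leq; apply/andP; split.
  by apply/bigmax_leqP => A /andP[_ sAX]; apply: subset_leq_card.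
by apply: (leq_bigmax_cond (P := fun A => (A \in I) && (A \subset X))); rewrite HX subxx.
Qed.

Lemma base_card (B : {set T}) : B \in bases I -> #|B| = rankM I.
Proof.
rewrite inE => /maxsetP [BI Bmax].
apply/eqP; rewrite eqn_leq ind_le_rank //=.
apply/bigmax_leqP => A /andP[AI _]; rewrite leqNgt; apply/negP => lt.
case: HM => _ _ aug; have [x xAB xBI] := aug _ _ BI AI lt.
have := Bmax _ xBI (subsetUr _ _) => e.
move: xAB; rewrite inE => /andP[/negP xB _]; apply: xB; rewrite -e; exact: setU11.
Qed.

Lemma nonloop_KM a (X : {set T}) : a \in KM I X -> [set a] \in I.
Proof.
rewrite inE => /eqP e; apply/negPn/negP => na.
have : mrank I (a |: X) <= mrank I X.
  apply/bigmax_leqP => A /andP[AI sA].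
  apply: (leq_bigmax_cond (P := fun A => (A \in I) && (A \subset X))).
  rewrite AI /=; apply/subsetP => y yA.
  have := subsetP sA y yA; rewrite !inE => /orP[/eqP ya|//].
  move: yA; rewrite ya => yA; case/negP: na; apply: (sub_ind AI); by rewrite sub1set.
by rewrite e ltnn.
Qed.

End H.

Theorem proposition4 (T : finType) (I : {set {set T}}) :
  is_matroid I -> 0 < rankM I ->
  forall B : {set T}, B \in bases I -> cover (FM I B) = cover (bases I).
Proof.
move=> HM r0 B HB.
have HBI : B \in I by move: HB; rewrite inE => /maxsetP[].
suff E : forall a, (a \in cover (FM I B)) = ([set a] \in I) /\
                   (a \in cover (bases I)) = ([set a] \in I).
  by apply/setP => a; have [-> ->] := E a.
move=> a; split.
- apply/idP/idP.
    case/bigcupP => K /imsetP [X _ ->]; exact: nonloop_KM.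
  move=> aI.
  pose P := fun A : {set T} => [&& A \in I, a \in A & A \subset a |: B].
  have P0 : P [set a] by rewrite /P aI set11 sub1set setU11.
  case: (arg_maxnP (fun A : {set T} => #|A|) P0) => A /and3P[AI aA sA] Amax.
  have cardA : #|A| = rankM I.
    apply/eqP; rewrite eqn_leq ind_le_rank // -(base_card HM HB) leqNgt.
    apply/negP => lt; case: HM => _ _ aug; have [x xBA xAI] := aug _ _ AI HBI lt.
    move: xBA; rewrite inE => /andP[xnA xB].
    have : P (x |: A).
      rewrite /P xAI setU1r //=; apply/subsetP => y; rewrite !inE => /orP[/eqP->|yA].
        by rewrite xB orbT.
      by have := subsetP sA y yA; rewrite !inE.
    move/Amax; rewrite /=  cardsU1 xnA add1n ltnn; done.
  apply/bigcupP; exists (KM I (A :\ a)); last first.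
    have AdI : A :\ a \in I by apply: (sub_ind HM AI); apply: subsetDl.
    rewrite inE setD1K // !mrank_ind //.
    by rewrite (cardsD1 a A) aA add1n.
  apply/imsetP; exists (A :\ a) => //.
  rewrite !inE (sub_ind HM AI (subsetDl _ _)) /=.
  have := cardsD1 a A; rewrite aA cardA add1n => ->.
  rewrite /= eqxx /=; apply/subsetP => y; rewrite !inE => /andP[ya yA].
  by have := subsetP sA y yA; rewrite !inE (negbTE ya).
- apply/idP/idP.
    case/bigcupP => B' HB' aB'; move: HB'; rewrite inE => /maxsetP[B'I _].
    by apply: (sub_ind HM B'I); rewrite sub1set.
  move=> aI; case: (maxset_exists (P := fun A => A \in I) aI) => B' mB' sB'.
  by apply/bigcupP; exists B'; rewrite ?inE // -sub1set.
Qed.
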